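(* Let $\mathcal{A}$ and $\mathcal{B}$ be unital $C^*$-algebras with units denoted $I$, let $\Phi:\mathcal{A}\to\mathcal{B}$ be a unital positive linear map, and let $A\in\mathcal{A}$ and $\alpha,\beta\in\mathbb{C}$ be such that $\Phi(C_{\alpha,\beta}(A))$ is accretive, where $C_{\alpha,\beta}(A)=(A-\alpha I)^*(\beta I-A)$. Then \[ \Phi(A^*A)-\Phi(A)^*\Phi(A)\leq \tfrac14|\beta-\alpha|^2I-\Phi({\rm Re}\,C_{\alpha,\beta}(A))\leq \tfrac14|\beta-\alpha|^2 I. \]
   Context: An element $S$ is accretive if ${\rm Re}\,S=(S+S^* )/2\geq 0$. *)

(* Defs.v *)
From mathcomp Require Import all_boot all_algebra.
From mathcomp Require Import reals complex.
Import GRing.Theory Num.Theory.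
Local Open Scope ring_scope.

Set Implicit Arguments.
Unset Strict Implicit.
Unset Printing Implicit Defensive.

Record cstar_algebra (R : realType) (A : algType R[i])
    (star : A -> A) (nrm : A -> R) : Prop := CstarAlgebra {
  star_add : forall x y, star (x + y) = star x + star y;
  star_scale : forall (c : R[i]) x, star (c *: x) = c^* *: star x;
  star_mul : forall x y, star (x * y) = star y * star x;
  star_invol : forall x, star (star x) = x;
  nrm_eq0 : forall x, nrm x = 0 -> x = 0;
  nrm_triangle : forall x y, nrm (x + y) <= nrm x + nrm y;
  nrm_scale : forall (c : R[i]) x, ((nrm (c *: x))%:C)%C = `|c| * ((nrm x)%:C)%C;
  nrm_submul : forall x y, nrm (x * y) <= nrm x * nrm y;
  nrm_cstar : forall x, nrm (star x * x) = nrm x ^+ 2;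
  nrm_complete : forall u : nat -> A,
    (forall e : R, 0 < e -> exists N, forall m n, (N <= m)%N -> (N <= n)%N ->
        nrm (u m - u n) < e) ->
    exists l, forall e : R, 0 < e -> exists N, forall n, (N <= n)%N ->
        nrm (u n - l) < e
}.

Definition cpos (R : realType) (A : algType R[i]) (star : A -> A) (x : A) : Prop :=
  exists y, x = star y * y.

Definition cle (R : realType) (A : algType R[i]) (star : A -> A) (x y : A) : Prop :=
  cpos star (y - x).

Definition cRe (R : realType) (A : algType R[i]) (star : A -> A) (S : A) : A :=
  (2%:R^-1 : R[i]) *: (S + star S).

Definition accretive (R : realType) (A : algType R[i]) (star : A -> A) (S : A) : Prop :=
  cpos star (cRe star S).

Definition positive_map (R : realType) (A B : algType R[i])
    (starA : A -> A) (starB : B -> B) (Phi : A -> B) : Prop :=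
  forall x, cpos starA x -> cpos starB (Phi x).

Definition Cab (R : realType) (A : algType R[i]) (star : A -> A)
    (alpha beta : R[i]) (X : A) : A :=
  star (X - alpha *: 1) * (beta *: 1 - X).

(* Main.v *)
Require Import Defs.
From mathcomp Require Import all_boot all_algebra.
From mathcomp Require Import reals complex.
From mathcomp Require Import ring.
Import GRing.Theory Num.Theory.
Local Open Scope ring_scope.

Section Star.
Context {R : realType} {A : algType R[i]} {star : A -> A} {nrm : A -> R}.
Hypothesis h : cstar_algebra star nrm.

Lemma stN x : star (- x) = - star x.
Proof. by rewrite -scaleN1r (star_scale h) rmorphN1 scaleN1r. Qed.
Lemma stB x y : star (x - y) = star x - star y.
Proof. by rewrite (star_add h) stN. Qed.
Lemma st1 : star 1 = 1.
Proof.
have := star_mul h 1 (star 1).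
by rewrite mul1r (star_invol h) mul1r => <-.
Qed.
Lemma stZ1 c : star (c *: 1) = c^* *: 1.
Proof. by rewrite (star_scale h) st1. Qed.
End Star.
Section NF.
Context {K : pzRingType} {V : lmodType K}.
Definition NF (u : V * V * V * V * V) (a b c d e : K) :=
  a *: u.1.1.1.1 + b *: u.1.1.1.2 + c *: u.1.1.2 + d *: u.1.2 + e *: u.2.
Lemma NF_add u a b c d e a' b' c' d' e' :
  NF u a b c d e + NF u a' b' c' d' e' = NF u (a + a') (b + b') (c + c') (d + d') (e + e').
Proof.
case: u => [[[[u1 u2] u3] u4] u5].
rewrite /NF /= !scalerDl.
rewrite (addrACA (_ + _ + _ + _) (e *: u5)).
rewrite (addrACA (_ + _ + _) (d *: u4)).
rewrite (addrACA (_ + _) (c *: u3)).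
by rewrite (addrACA (a *: u1) (b *: u2)).
Qed.
Lemma NF_scale u k a b c d e : k *: NF u a b c d e = NF u (k * a) (k * b) (k * c) (k * d) (k * e).
Proof. by rewrite /NF !scalerDr !scalerA. Qed.
Lemma NF_opp u a b c d e : - NF u a b c d e = NF u (- a) (- b) (- c) (- d) (- e).
Proof. by rewrite -scaleN1r NF_scale !mulN1r. Qed.
Lemma NF1 u : NF u 1 0 0 0 0 = u.1.1.1.1. Proof. by rewrite /NF !scale0r !addr0 scale1r. Qed.
Lemma NF2 u : NF u 0 1 0 0 0 = u.1.1.1.2. Proof. by rewrite /NF !scale0r !addr0 add0r scale1r. Qed.
Lemma NF3 u : NF u 0 0 1 0 0 = u.1.1.2. Proof. by rewrite /NF !scale0r !addr0 !add0r scale1r. Qed.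
Lemma NF4 u : NF u 0 0 0 1 0 = u.1.2. Proof. by rewrite /NF !scale0r !addr0 !add0r scale1r. Qed.
Lemma NF5 u : NF u 0 0 0 0 1 = u.2. Proof. by rewrite /NF !scale0r !add0r scale1r. Qed.
End NF.

Section Phi.
Variables (R : realType) (A B : algType R[i]).
Variables (starA : A -> A) (nrmA : A -> R) (starB : B -> B) (nrmB : B -> R).
Hypotheses (hA : cstar_algebra starA nrmA) (hB : cstar_algebra starB nrmB).
Variable Phi : {linear A -> B}.
Hypotheses (hPhi_pos : positive_map starA starB Phi).

Lemma sa_of_pos (y : B) : starB (starB y * y) = starB y * y.
Proof. by rewrite (star_mul hB) (star_invol hB). Qed.

Lemma Phi_sa x : starA x = x -> starB (Phi x) = Phi x.
Proof.
move=> sx.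
have ex : x = 4%:R^-1 *: (starA (x + 1) * (x + 1) - starA (x - 1) * (x - 1)).
  rewrite (star_add hA) (stB hA) (st1 hA) sx -!expr2 sqrrD1 sqrrB1.
  move: (x ^+ 2) => u.
  rewrite [u + _ + 1]addrAC [u - _ + 1]addrAC [u + 1 + _]addrC addrKA opprK.
  rewrite -mulrnDr.
  by rewrite -[x *+ _]scaler_nat scalerA mulVf ?scale1r // pnatr_eq0.
have [c1 e1] := hPhi_pos (starA (x + 1) * (x + 1)) (ex_intro _ (x + 1) erefl).
have [c2 e2] := hPhi_pos (starA (x - 1) * (x - 1)) (ex_intro _ (x - 1) erefl).
rewrite ex linearZ linearB /= e1 e2 (star_scale hB) (stB hB) !sa_of_pos.
rewrite fmorphV.
by rewrite rmorph_nat.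
Qed.

Lemma Phi_star x : Phi (starA x) = starB (Phi x).
Proof.
pose hx := 2%:R^-1 *: (x + starA x) : A.
pose kx := (- 'i * 2%:R^-1) *: (x - starA x) : A.
have shx : starA hx = hx.
  by rewrite /hx (star_scale hA) (star_add hA) (star_invol hA) fmorphV rmorph_nat addrC.
have skx : starA kx = kx.
  rewrite /kx (star_scale hA) (stB hA) (star_invol hA) rmorphM rmorphN /= conjCi fmorphV rmorph_nat opprK.
  by rewrite -opprB scalerN -scaleNr mulNr.
have ex : x = hx + 'i *: kx.
  rewrite /hx /kx scalerA mulrA mulrN -expr2 sqrCi opprK mul1r -scalerDr.
  rewrite addrACA subrr addr0 -mulr2n -[x *+ 2]scaler_nat scalerA mulVf ?scale1r //.
  by rewrite pnatr_eq0.
clearbody hx kx.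
rewrite ex (star_add hA) (star_scale hA) shx skx !linearD !linearZ /=.
by rewrite (star_add hB) (star_scale hB) !(Phi_sa _ shx) !(Phi_sa _ skx).
Qed.
End Phi.

Theorem lemma3p7 (R : realType) (A B : algType R[i])
    (starA : A -> A) (nrmA : A -> R) (starB : B -> B) (nrmB : B -> R)
    (hA : cstar_algebra starA nrmA) (hB : cstar_algebra starB nrmB)
    (Phi : {linear A -> B})
    (hPhi_pos : positive_map starA starB Phi) (hPhi_unit : Phi 1 = 1)
    (X : A) (alpha beta : R[i])
    (hacc : accretive starB (Phi (Cab starA alpha beta X))) :
  cle starB (Phi (starA X * X) - starB (Phi X) * Phi X)
      ((`|beta - alpha| ^+ 2 / 4%:R) *: 1 - Phi (cRe starA (Cab starA alpha beta X)))
  /\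
  cle starB
      ((`|beta - alpha| ^+ 2 / 4%:R) *: 1 - Phi (cRe starA (Cab starA alpha beta X)))
      ((`|beta - alpha| ^+ 2 / 4%:R) *: 1).
Proof.
have PS := @Phi_star _ _ _ _ _ _ _ hA hB Phi hPhi_pos.
have PSA := @Phi_sa _ _ _ _ _ _ _ hA hB Phi hPhi_pos.
have ePR : Phi (cRe starA (Cab starA alpha beta X)) = cRe starB (Phi (Cab starA alpha beta X)).
  by rewrite /cRe linearZ linearD /= PS.
rewrite ePR.
split; last first.
  by rewrite /cle opprB addrCA subrr addr0.
have eC : Cab starA alpha beta X =
    beta *: starA X - starA X * X - (alpha^* * beta) *: 1 + alpha^* *: X.
  rewrite /Cab (stB hA) (stZ1 hA) mulrBl !mulrBr -!scalerAl -!scalerAr !mul1r !mulr1 scalerA.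
  by rewrite opprB addrA addrAC.
have sZ : starA (starA X * X) = starA X * X by rewrite (star_mul hA) (star_invol hA).
have sZB := PSA _ sZ.
exists (Phi X - ((alpha + beta) / 2%:R) *: 1).
rewrite /cRe eC !linearD !linearN !linearZ /= PS hPhi_unit.
rewrite !(star_add hB) !(stN hB) !(star_scale hB) (star_invol hB) sZB.
rewrite (stN hB) (st1 hB) !scalerN.
rewrite mulrDl !mulrDr !mulrN !mulNr -!scalerAl -!scalerAr !mul1r !mulr1 scalerA.
set Ys := starB (Phi X); set Y := Phi X; set Z := Phi (starA X * X); set W := Ys * Y.
clearbody Ys Y Z W.
pose u := (Ys, Y, Z, 1 : B, W).
have N1 : Ys = NF u 1 0 0 0 0 by rewrite NF1.
have N2 : Y = NF u 0 1 0 0 0 by rewrite NF2.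
have N3 : Z = NF u 0 0 1 0 0 by rewrite NF3.
have N4 : (1 : B) = NF u 0 0 0 1 0 by rewrite NF4.
have N5 : W = NF u 0 0 0 0 1 by rewrite NF5.
clearbody u.
rewrite N1 N2 N3 N4 N5.
rewrite !(NF_scale, NF_opp, NF_add).
congr NF; rewrite ?normCK ?rmorphM ?rmorphB ?rmorphD /= ?conjCK ?fmorphV ?rmorph_nat; field.
all: done.
Qed.
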